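(* Let $\mathbf{K}$ be a linear canonical transformation of $\mathbb{C}^{2n}$. The following are equivalent: (i) $-1\notin\operatorname{Spec}\mathbf{K}$ and $\operatorname{Re}\sigma\big(\overline{\mathbf{z}},\,i(1+\mathbf{K})^{-1}(1-\mathbf{K})\mathbf{z}\big)<0$ for all $\mathbf{z}\in\mathbb{C}^{2n}\setminus\{0\}$; (ii) $-1\notin\operatorname{Spec}\mathbf{K}$ and $\operatorname{Re}\sigma\big(\mathbf{z},\,i(1+\mathbf{K})^{-1}(1-\mathbf{K})\mathbf{z}\big)<0$ for all $\mathbf{z}\in\mathbb{R}^{2n}\setminus\{0\}$; (iii) $\mathbf{K}$ is strictly positive.
   Context: Points of $\mathbb{C}^{2n}$ are written $\mathbf{z}=(x,\xi)$, and $\sigma((x_1,\xi_1),(x_2,\xi_2))=\xi_1\cdot x_2-\xi_2\cdot x_1$ (complex bilinear, no conjugation). A complex linear map $\mathbf{K}$ of $\mathbb{C}^{2n}$ is canonical if $\sigma(\mathbf{K}\mathbf{z},\mathbf{K}\mathbf{w})=\sigma(\mathbf{z},\mathbf{w})$ for all $\mathbf{z},\mathbf{w}$; it is strictly positive if it is canonical and $i\big(\sigma(\overline{\mathbf{K}\mathbf{z}},\mathbf{K}\mathbf{z})-\sigma(\overline{\mathbf{z}},\mathbf{z})\big)>0$ for all $\mathbf{z}\in\mathbb{C}^{2n}\setminus\{0\}$. *)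

(* Defs.v *)
(* C^{2n} is modelled as column vectors 'cV[C]_(n + n) over an
   arbitrary numeric closed field C (e.g. algC); the first n coordinates are x,
   the last n are xi. *)
From HB Require Import structures.
From mathcomp Require Import all_boot all_order all_algebra.
Set Implicit Arguments. Unset Strict Implicit. Unset Printing Implicit Defensive.
Import Order.TTheory GRing.Theory Num.Theory.
Local Open Scope ring_scope.

Definition sigma {C : numClosedFieldType} {n : nat} (z w : 'cV[C]_(n + n)) : C :=
  \sum_(j < n) (dsubmx z j 0 * usubmx w j 0 - dsubmx w j 0 * usubmx z j 0).

Definition conjv {C : numClosedFieldType} {n : nat} (z : 'cV[C]_(n + n)) :
  'cV[C]_(n + n) := map_mx (@Num.conj C) z.

Definition canonical {C : numClosedFieldType} {n : nat} (K : 'M[C]_(n + n)) : Prop :=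
  forall z w : 'cV[C]_(n + n), sigma (K *m z) (K *m w) = sigma z w.

Definition strictly_positive {C : numClosedFieldType} {n : nat}
  (K : 'M[C]_(n + n)) : Prop :=
  canonical K /\
  forall z : 'cV[C]_(n + n), z != 0 ->
    0 < 'i * (sigma (conjv (K *m z)) (K *m z) - sigma (conjv z) z).

Definition realv {C : numClosedFieldType} {n : nat} (z : 'cV[C]_(n + n)) : Prop :=
  forall i j, z i j \is Num.real.

Definition cayley {C : numClosedFieldType} {n : nat} (K : 'M[C]_(n + n)) :
  'M[C]_(n + n) := 'i *: (invmx (1%:M + K) *m (1%:M - K)).

(* Main.v *)
Require Import Defs.
From HB Require Import structures.
From mathcomp Require Import all_boot all_order all_algebra ring.
Import Order.TTheory GRing.Theory Num.Theory.
Local Open Scope ring_scope.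

Lemma sigmaE {C : numClosedFieldType} {n : nat} (z w : 'cV[C]_(n + n)) :
  sigma z w = \sum_(j < n) (z (rshift n j) 0 * w (lshift n j) 0 - w (rshift n j) 0 * z (lshift n j) 0).
Proof. by rewrite /sigma; apply: eq_bigr => j _; rewrite !mxE. Qed.

Lemma sigmaDl {C : numClosedFieldType} {n : nat} (z1 z2 w : 'cV[C]_(n + n)) :
  sigma (z1 + z2) w = sigma z1 w + sigma z2 w.
Proof. rewrite !sigmaE -big_split; apply: eq_bigr => j _ /=; rewrite !mxE; ring. Qed.

Lemma sigmaZl {C : numClosedFieldType} {n : nat} c (z w : 'cV[C]_(n + n)) :
  sigma (c *: z) w = c * sigma z w.
Proof. rewrite !sigmaE mulr_sumr; apply: eq_bigr => j _; rewrite !mxE; ring. Qed.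

Lemma sigmaC {C : numClosedFieldType} {n : nat} (z w : 'cV[C]_(n + n)) :
  sigma z w = - sigma w z.
Proof. rewrite !sigmaE -sumrN; apply: eq_bigr => j _; ring. Qed.

Lemma sigmaDr {C : numClosedFieldType} {n : nat} (z w1 w2 : 'cV[C]_(n + n)) :
  sigma z (w1 + w2) = sigma z w1 + sigma z w2.
Proof. by rewrite sigmaC sigmaDl (sigmaC w1) (sigmaC w2) opprD !opprK. Qed.

Lemma sigmaZr {C : numClosedFieldType} {n : nat} c (z w : 'cV[C]_(n + n)) :
  sigma z (c *: w) = c * sigma z w.
Proof. by rewrite sigmaC sigmaZl (sigmaC w) mulrN opprK. Qed.

Lemma sigmaNl {C : numClosedFieldType} {n : nat} (z w : 'cV[C]_(n + n)) :
  sigma (- z) w = - sigma z w.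
Proof. by rewrite -scaleN1r sigmaZl mulN1r. Qed.

Lemma sigmaNr {C : numClosedFieldType} {n : nat} (z w : 'cV[C]_(n + n)) :
  sigma z (- w) = - sigma z w.
Proof. by rewrite -scaleN1r sigmaZr mulN1r. Qed.

Lemma sigmaBl {C : numClosedFieldType} {n : nat} (z1 z2 w : 'cV[C]_(n + n)) :
  sigma (z1 - z2) w = sigma z1 w - sigma z2 w.
Proof. by rewrite sigmaDl sigmaNl. Qed.

Lemma sigmaBr {C : numClosedFieldType} {n : nat} (z w1 w2 : 'cV[C]_(n + n)) :
  sigma z (w1 - w2) = sigma z w1 - sigma z w2.
Proof. by rewrite sigmaDr sigmaNr. Qed.

Lemma conj_sigma {C : numClosedFieldType} {n : nat} (z w : 'cV[C]_(n + n)) :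
  (sigma z w)^* = sigma (conjv z) (conjv w).
Proof.
rewrite !sigmaE rmorph_sum; apply: eq_bigr => j _.
by rewrite /conjv !mxE rmorphB !rmorphM.
Qed.

Lemma conjvD {C : numClosedFieldType} {n : nat} (z w : 'cV[C]_(n + n)) :
  conjv (z + w) = conjv z + conjv w.
Proof. by apply/matrixP => i j; rewrite !mxE rmorphD. Qed.

Lemma conjvZ {C : numClosedFieldType} {n : nat} c (z : 'cV[C]_(n + n)) :
  conjv (c *: z) = c^* *: conjv z.
Proof. by apply/matrixP => i j; rewrite !mxE rmorphM. Qed.

Lemma conjvN {C : numClosedFieldType} {n : nat} (z : 'cV[C]_(n + n)) :
  conjv (- z) = - conjv z.
Proof. by apply/matrixP => i j; rewrite !mxE rmorphN. Qed.

Lemma conjvK {C : numClosedFieldType} {n : nat} (z : 'cV[C]_(n + n)) :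
  conjv (conjv z) = z.
Proof. by apply/matrixP => i j; rewrite !mxE conjCK. Qed.

Lemma cayleyP {C : numClosedFieldType} {n : nat} (K : 'M[C]_(n + n)) (w : 'cV[C]_(n + n)) :
  (1%:M + K) \in unitmx -> cayley K *m ((1%:M + K) *m w) = 'i *: (w - K *m w).
Proof.
move=> PU; rewrite /cayley -scalemxAl; congr (_ *: _).
have comm : (1%:M - K) *m (1%:M + K) = (1%:M + K) *m (1%:M - K).
  rewrite mulmxBl mulmxDl !mul1mx !mulmxDr mulmxN !mulmx1.
  by rewrite opprD addrA addrK addrA subrK.
by rewrite mulmxA -(mulmxA (invmx _)) comm mulmxA mulVmx // mul1mx mulmxBl mul1mx.
Qed.

Lemma sigma0l {C : numClosedFieldType} {n : nat} (w : 'cV[C]_(n + n)) : sigma 0 w = 0.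
Proof. by rewrite sigmaE big1 // => j _; rewrite !mxE mul0r mulr0 subrr. Qed.

Lemma key {C : numClosedFieldType} {n : nat} (K : 'M[C]_(n + n)) (w : 'cV[C]_(n + n)) :
  (1%:M + K) \in unitmx ->
  'i * (sigma (conjv (K *m w)) (K *m w) - sigma (conjv w) w) =
  - 'Re (sigma (conjv ((1%:M + K) *m w)) (cayley K *m ((1%:M + K) *m w))).
Proof.
move=> PU; rewrite cayleyP // mulmxDl mul1mx conjvD ReE.
rewrite sigmaDl !sigmaZr !sigmaBr.
rewrite !(rmorphM, rmorphD, rmorphB, rmorphN) /= conjCi !conj_sigma !conjvK.
rewrite (sigmaC w (conjv w)) (sigmaC (K *m w) (conjv w)) (sigmaC w (conjv (K *m w))).
rewrite (sigmaC (K *m w) (conjv (K *m w))).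
by field.
Qed.

Lemma Bsym {C : numClosedFieldType} {n : nat} (K : 'M[C]_(n + n)) (z w : 'cV[C]_(n + n)) :
  canonical K -> (1%:M + K) \in unitmx ->
  sigma z (cayley K *m w) = sigma w (cayley K *m z).
Proof.
move=> hK PU.
suff H : forall z' w', sigma ((1%:M + K) *m z') (cayley K *m ((1%:M + K) *m w')) =
                      sigma ((1%:M + K) *m w') (cayley K *m ((1%:M + K) *m z')).
  have Ez : z = (1%:M + K) *m (invmx (1%:M + K) *m z) by rewrite mulmxA mulmxV // mul1mx.
  have Ew : w = (1%:M + K) *m (invmx (1%:M + K) *m w) by rewrite mulmxA mulmxV // mul1mx.
  by rewrite Ez Ew H.
move=> z' w'; rewrite !cayleyP // !mulmxDl !mul1mx !sigmaDl !sigmaZr !sigmaBr !hK.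
rewrite (sigmaC w' z') (sigmaC w' (K *m z')) (sigmaC (K *m w') z'); ring.
Qed.

Lemma eig_unit {C : numClosedFieldType} {n : nat} (K : 'M[C]_(n + n)) :
  ~~ eigenvalue K (-1) = ((1%:M + K) \in unitmx).
Proof.
rewrite /eigenvalue /eigenspace negbK kermx_eq0 row_free_unit.
by rewrite raddfN /= opprK addrC.
Qed.

Lemma sp_unit {C : numClosedFieldType} {n : nat} (K : 'M[C]_(n + n)) :
  strictly_positive K -> (1%:M + K) \in unitmx.
Proof.
case=> _ hpos; apply/negPn/negP => nU.
have : ~~ row_free (1%:M + K)^T by rewrite row_free_unit unitmx_tr.
rewrite -kermx_eq0 => /rowV0Pn [v]; rewrite sub_kermx => /eqP vk vnz.
have Pw : (1%:M + K) *m v^T = 0 by rewrite -[1%:M + K]trmxK -trmx_mul vk trmx0.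
have Kw : K *m v^T = - v^T.
  by apply/eqP; rewrite -addr_eq0 addrC -[X in X + _ == _]mul1mx -mulmxDl Pw.
have := hpos v^T; rewrite trmx_eq0 vnz Kw conjvN sigmaNl sigmaNr opprK subrr mulr0 ltxx.
by move=> /(_ isT).
Qed.

Lemma i_iii {C : numClosedFieldType} {n : nat} (K : 'M[C]_(n + n)) :
  canonical K ->
  (~~ eigenvalue K (-1) /\
       forall z : 'cV[C]_(n + n), z != 0 ->
         'Re (sigma (conjv z) (cayley K *m z)) < 0)
    <-> strictly_positive K.
Proof.
move=> hK; split.
  rewrite eig_unit; case=> PU hneg; split => // z nz.
  rewrite key // oppr_gt0; apply: hneg.
  apply: contra nz => /eqP Pz.
  by rewrite -[z]mul1mx -(mulVmx PU) -mulmxA Pz mulmx0.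
move=> sp; have PU := @sp_unit _ _ K sp; rewrite eig_unit; split => // u nu.
have Eu : u = (1%:M + K) *m (invmx (1%:M + K) *m u) by rewrite mulmxA mulmxV // mul1mx.
rewrite Eu -oppr_gt0 -key //; case: sp => _; apply.
by apply: contra nu => /eqP w0; rewrite Eu w0 mulmx0.
Qed.

Lemma i_ii {C : numClosedFieldType} {n : nat} (K : 'M[C]_(n + n)) :
  canonical K ->
  (~~ eigenvalue K (-1) /\
       forall z : 'cV[C]_(n + n), z != 0 ->
         'Re (sigma (conjv z) (cayley K *m z)) < 0)
    <-> (~~ eigenvalue K (-1) /\
       forall z : 'cV[C]_(n + n), realv z -> z != 0 ->
         'Re (sigma z (cayley K *m z)) < 0).
Proof.
move=> hK; split; case=> eK hneg; split => //.
  move=> z rz nz; have Ec : conjv z = z.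
    by apply/matrixP => i j; rewrite mxE conj_Creal.
  rewrite -{1}Ec; exact: hneg.
move: eK; rewrite eig_unit => PU z nz.
pose x := map_mx (fun t => 'Re t) z; pose y := map_mx (fun t => 'Im t) z.
have hz : z = x + 'i *: y.
  by apply/matrixP => i j; rewrite !mxE -Crect.
have hcz : conjv z = x - 'i *: y.
  apply/matrixP => i j; rewrite !mxE {1}(Crect (z i j)) rmorphD rmorphM /= conjCi.
  by rewrite !conj_Creal ?Creal_Re ?Creal_Im // mulNr.
have rx : realv x by move=> i j; rewrite mxE Creal_Re.
have ry : realv y by move=> i j; rewrite mxE Creal_Im.
have hle : forall v, realv v -> 'Re (sigma v (cayley K *m v)) <= 0.
  move=> v rv; have [->|nv] := eqVneq v 0.
    by rewrite sigma0l ReE rmorph0 addr0 mul0r.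
  by apply/ltW/hneg.
have E : sigma (conjv z) (cayley K *m z) =
         sigma x (cayley K *m x) + sigma y (cayley K *m y).
  rewrite hcz hz mulmxDr -scalemxAr sigmaBl !sigmaDr !sigmaZl !sigmaZr.
  rewrite (Bsym K y x hK PU).
  have i2 := mulCii C.
  rewrite mulrA i2; ring.
rewrite E raddfD /=.
have [x0|nx] := eqVneq x 0.
  have ny : y != 0.
    by apply: contra nz => /eqP y0; rewrite hz x0 y0 scaler0 addr0.
  by rewrite -[0]addr0 ler_ltD ?hle ?hneg.
by rewrite -[0]addr0 ltr_leD ?hle ?hneg.
Qed.

Theorem proposition4p3 (C : numClosedFieldType) (n : nat) (K : 'M[C]_(n + n)) :
  canonical K ->
  [/\ (~~ eigenvalue K (-1) /\
       forall z : 'cV[C]_(n + n), z != 0 ->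
         'Re (sigma (conjv z) (cayley K *m z)) < 0)
    <-> strictly_positive K,
      (~~ eigenvalue K (-1) /\
       forall z : 'cV[C]_(n + n), realv z -> z != 0 ->
         'Re (sigma z (cayley K *m z)) < 0)
    <-> strictly_positive K
    & (~~ eigenvalue K (-1) /\
       forall z : 'cV[C]_(n + n), z != 0 ->
         'Re (sigma (conjv z) (cayley K *m z)) < 0)
    <-> (~~ eigenvalue K (-1) /\
       forall z : 'cV[C]_(n + n), realv z -> z != 0 ->
         'Re (sigma z (cayley K *m z)) < 0)].
Proof.
move=> hK; have A := i_iii K hK; have B := i_ii K hK.
split => //; rewrite -A; split; by move/B.
Qed.
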